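(* For every route $R$ and every $b\in\mathbb{Z}^{V_+}_{\ge0}$, $$\operatorname{conv}\big(\Pi(R)\cap[\mathbf 0,b]^N\big)=\operatorname{conv}(\Pi(R))\cap[\mathbf 0,b]^N.$$
   Context: $G=(V,E)$ complete undirected graph with $V=\{0\}\cup V_+$ ($0$ depot, $V_+$ customers); $D=(V,A)$ replaces each edge by two opposite arcs. Capacity $C\in\mathbb{Q}_{>0}$; scenarios $\xi\in[N]$ with demand vectors $d^\xi\in\mathbb{Q}^{V_+}_{\ge0}$, $d^\xi(v)\le C$ for all $\xi,v$. A route $R=(v_1,\dots,v_\ell)$ is the cycle $0,v_1,\dots,v_\ell,0$ through distinct customers, $v_0=v_{\ell+1}=0$. Vectors $y\in\mathbb{R}^{[N]\times V_+}$ have entries $y^\xi_v$. For a route $R$ and $\xi$, $\mathcal{Y}^\xi(R)$ is the set of $y^\xi\in\mathbb{Z}^{V_+}_{\ge0}$ for which there exist $f\in\mathbb{R}^A_{\ge0}$, $g\in\mathbb{R}^{V_+}_{\ge0}$ with $f_{(v_{i-1},v_i)}+d^\xi(v_i)=f_{(v_i,v_{i+1})}+g_{v_i}$ ($i\in[\ell]$), $f_{(v_{i-1},v_i)}\le C$ ($i\in[\ell+1]$), $g_{v_i}\le Cy^\xi_{v_i}$ ($i\in[\ell]$). $\Pi(R)=\mathcal{Y}^1(R)\times\cdots\times\mathcal{Y}^N(R)$. $[\mathbf 0,b]^N=\{y:0\le y^\xi_v\le b_v\ \forall\xi,v\}$. *)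

(* Defs.v *)
From HB Require Import structures.
From mathcomp Require Import all_boot all_order all_algebra.
Set Implicit Arguments. Unset Strict Implicit. Unset Printing Implicit Defensive.
Import Order.TTheory GRing.Theory Num.Theory.
Local Open Scope ring_scope.

(* Customers V_+ = 'I_n ; vertices V = option 'I_n with None = depot 0.
   Scenarios [N] = 'I_N.  Vectors y in R^{[N] x V_+} are matrices 'M[R]_(N,n),
   entry y xi v = y^xi_v. *)
Definition vertex (n : nat) := option 'I_n.

Definition is_route (n : nat) (r : seq 'I_n) : Prop := uniq r /\ (0 < size r)%N.

(* v_i of the route, with v_0 = v_{l+1} = depot. *)
Definition rvtx (n : nat) (r : seq 'I_n) (i : nat) : vertex n :=
  if (1 <= i <= size r)%N then
    (if r is x0 :: _ then Some (nth x0 r i.-1) else None)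
  else None.

Definition Yxi (R : realFieldType) (n : nat) (C : R) (dxi : 'I_n -> R)
    (r : seq 'I_n) (y : 'I_n -> R) : Prop :=
  (forall v, exists k : nat, y v = k%:R) /\
  exists (f : vertex n -> vertex n -> R) (g : 'I_n -> R),
    (forall u w, u != w -> 0 <= f u w) /\
    (forall v, 0 <= g v) /\
    (forall i : nat, (1 <= i <= size r)%N ->
       forall v, rvtx r i = Some v ->
       f (rvtx r i.-1) (rvtx r i) + dxi v = f (rvtx r i) (rvtx r i.+1) + g v) /\
    (forall i : nat, (1 <= i <= (size r).+1)%N -> f (rvtx r i.-1) (rvtx r i) <= C) /\
    (forall i : nat, (1 <= i <= size r)%N ->
       forall v, rvtx r i = Some v -> g v <= C * y v).

Definition Pi (R : realFieldType) (N n : nat) (C : R) (d : 'I_N -> 'I_n -> R)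
    (r : seq 'I_n) (y : 'M[R]_(N, n)) : Prop :=
  forall xi : 'I_N, Yxi C (d xi) r (fun v => y xi v).

Definition box (R : realFieldType) (N n : nat) (b : 'I_n -> nat)
    (y : 'M[R]_(N, n)) : Prop :=
  forall (xi : 'I_N) (v : 'I_n), 0 <= y xi v /\ y xi v <= (b v)%:R.

Definition conv (R : realFieldType) (N n : nat) (S : 'M[R]_(N, n) -> Prop)
    (x : 'M[R]_(N, n)) : Prop :=
  exists (m : nat) (lam : 'I_m -> R) (p : 'I_m -> 'M[R]_(N, n)),
    (forall k, S (p k)) /\ (forall k, 0 <= lam k) /\
    \sum_(k < m) lam k = 1 /\ x = \sum_(k < m) lam k *: p k.

(* Main.v *)
Require Import Defs.
From HB Require Import structures.
From mathcomp Require Import all_boot all_order all_algebra.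
From mathcomp Require Import lra zify.
Set Implicit Arguments. Unset Strict Implicit. Unset Printing Implicit Defensive.
Import Order.TTheory GRing.Theory Num.Theory.
Local Open Scope ring_scope.


Fixpoint flr (R : realFieldType) (B : nat) (x : R) : nat :=
  if B is B'.+1 then (if B%:R <= x then B else flr B' x) else 0%N.

Lemma flr_spec (R : realFieldType) (B : nat) (x : R) :
  0 <= x -> x < B.+1%:R -> (flr B x)%:R <= x /\ x < (flr B x).+1%:R.
Proof.
elim: B => [|B IH] x0 xB /=; first by rewrite x0.
case: ifP => H; first by rewrite H.
apply: IH => //; rewrite ltNge H //.
Qed.

Lemma flr_uniq (R : realFieldType) (B m : nat) (x : R) :
  0 <= x -> x < B.+1%:R -> m%:R <= x -> x < m.+1%:R -> flr B x = m.
Proof.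
move=> x0 xB h1 h2; have [a b] := flr_spec x0 xB.
have e1 : (flr B x < m.+1)%N by rewrite -(ltr_nat R); apply: le_lt_trans a h2.
have e2 : (m < (flr B x).+1)%N by rewrite -(ltr_nat R); apply: le_lt_trans h1 b.
lia.
Qed.

Lemma flr_lo (R : realFieldType) (B k : nat) (a a' : R) :
  0 <= a -> a' < B.+1%:R -> a + k%:R <= a' -> (flr B a + k <= flr B a')%N.
Proof.
move=> a0 aB h.
have k0 : 0 <= k%:R :> R by [].
have a'0 : 0 <= a' by lra.
have aB' : a < B.+1%:R by lra.
have [u1 u2] := flr_spec a0 aB'; have [v1 v2] := flr_spec a'0 aB.
have : (flr B a + k)%:R < (flr B a').+1%:R :> R by rewrite natrD; lra.
by rewrite ltr_nat ltnS.
Qed.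

Lemma flr_hi (R : realFieldType) (B k : nat) (a a' : R) :
  0 <= a -> 0 <= a' -> a < B.+1%:R -> a' < B.+1%:R -> a' <= a + k%:R -> (flr B a' <= flr B a + k)%N.
Proof.
move=> a0 a'0 aB a'B h.
have [u1 u2] := flr_spec a0 aB; have [v1 v2] := flr_spec a'0 a'B.
have : (flr B a')%:R < (flr B a + k).+1%:R :> R by rewrite -addSn natrD; lra.
by rewrite ltr_nat ltnS.
Qed.
Definition nxt (R : realFieldType) (T : seq R) (t : R) : R :=
  foldr (fun a acc => if (t < a) && (a < acc) then a else acc) 1 T.

Lemma nxt_mem (R : realFieldType) (T : seq R) t : nxt T t = 1 \/ nxt T t \in T.
Proof.
elim: T => [|a T IH] /=; first by left.
case: ifP => _; first by right; rewrite inE eqxx.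
by case: IH => H; [left | right; rewrite inE H orbT].
Qed.

Lemma nxt_gt (R : realFieldType) (T : seq R) t : t < 1 -> t < nxt T t.
Proof.
move=> t1; elim: T => [|a T IH] //=.
by case: ifP => // /andP[].
Qed.

Lemma nxt_le1 (R : realFieldType) (T : seq R) t : nxt T t <= 1.
Proof.
elim: T => [|a T IH] //=.
case: ifP => // /andP[_ h]; exact: (ltW (lt_le_trans h IH)).
Qed.

Lemma nxt_min (R : realFieldType) (T : seq R) t a : a \in T -> t < a -> nxt T t <= a.
Proof.
elim: T => [|b T IH] //= aT ta.
move: aT; rewrite inE => /orP[/eqP eab|aT].
  subst b; case: ifP => // /negbT; rewrite negb_and ta /= -leNgt //.

case: ifP => [/andP[_ h]|_]; last exact: IH.
exact: (ltW (lt_le_trans h (IH aT ta))).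
Qed.

Definition wt (R : realFieldType) (T : seq R) (t : R) := nxt T t - t.

Lemma tele (R : realFieldType) (T : seq R) :
  uniq T -> (forall t, t \in T -> t < 1) ->
  forall b, b \in T \/ b = 1 -> \sum_(t <- T | b <= t) wt T t = 1 - b.
Proof.
move=> uT T1 b.
have [k] : exists k, leq (size (filter (fun t => b <= t) T)) k by exists (size (filter (fun t => b <= t) T)).
elim: k b => [|k IH] b hk hb.
  move: hk; rewrite leqn0 => /nilP hnil.
  rewrite -big_filter hnil big_nil.
  case: hb => [bT|->]; last by rewrite subrr.
  have : b \in filter (fun t => b <= t) T by rewrite mem_filter lexx.
  by rewrite hnil.
case: hb => [bT|->]; last first.
  rewrite big_seq_cond big1 ?subrr // => t /andP[tT ht].
  by have := T1 t tT; rewrite ltNge ht.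
have b1 := T1 b bT.
have hp : perm_eq (filter (fun t => b <= t) T) (b :: filter (fun t => nxt T b <= t) T).
  apply: uniq_perm; first exact: filter_uniq.
    rewrite /= filter_uniq // andbT mem_filter negb_and -ltNge nxt_gt //.
  move=> x; rewrite inE !mem_filter.
  case: (boolP (x == b)) => [/eqP ->|xb] /=; first by rewrite lexx bT.
  case: (boolP (x \in T)) => xT; rewrite ?andbF //= !andbT.
  apply/idP/idP => h.
    apply: nxt_min => //; rewrite lt_neqAle h andbT eq_sym //.
  exact: (ltW (lt_le_trans (nxt_gt T b1) h)).
rewrite -big_filter (perm_big _ hp) big_cons big_filter.
rewrite IH.
- by rewrite /wt /=; set u := nxt T b; change (u - b + (1 - u) = 1 - b); lra.
- by move: hk; rewrite (perm_size hp).
- by case: (nxt_mem T b) => h; [right|left].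
Qed.

Lemma wt_sum (R : realFieldType) (T : seq R) :
  uniq T -> (forall t, t \in T -> 0 <= t < 1) -> 0 \in T -> \sum_(t <- T) wt T t = 1.
Proof.
move=> uT T01 T0.
have := @tele R T uT (fun t h => (andP (T01 t h)).2) 0 (or_introl T0).
rewrite subr0 => <-; rewrite [RHS]big_seq_cond [LHS]big_seq_cond.
by apply: eq_bigl => t; case: (boolP (t \in T)) => // tT; rewrite (andP (T01 t tT)).1.
Qed.

Lemma wt_ge0 (R : realFieldType) (T : seq R) t : t < 1 -> 0 <= wt T t.
Proof. by move=> h; rewrite /wt subr_ge0 ltW // nxt_gt. Qed.

Lemma flr_shift (R : realFieldType) (B : nat) (x t : R) :
  0 <= x -> x <= B%:R -> 0 <= t < 1 ->
  flr B (x + t) = (flr B x + ((flr B x)%:R + 1 - x <= t)%R)%N.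
Proof.
move=> x0 xB /andP[t0 t1].
have xB' : x < B.+1%:R by rewrite -natr1; lra.
have [a b] := flr_spec x0 xB'.
have xtB : x + t < B.+1%:R by rewrite -natr1; lra.
set m := flr B x in a b *.
case: (boolP ((m%:R + 1 - x <= t))) => h /=.
  rewrite addn1; apply: flr_uniq => //; [lra| |]; rewrite -natr1; try lra.
rewrite addn0; apply: flr_uniq => //; [lra| |]; try lra.
Qed.

Lemma avg (R : realFieldType) (T : seq R) (B : nat) (x : R) :
  uniq T -> (forall t, t \in T -> 0 <= t < 1) -> 0 \in T ->
  0 <= x -> x <= B%:R -> ((flr B x)%:R + 1 - x \in T \/ (flr B x)%:R + 1 - x = 1) ->
  \sum_(t <- T) wt T t * (flr B (x + t))%:R = x.
Proof.
move=> uT T01 T0 x0 xB hb.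
rewrite big_seq (eq_bigr (fun t => wt T t * (flr B x)%:R + wt T t * ((flr B x)%:R + 1 - x <= t)%R%:R)); last first.
  by move=> t tT; rewrite flr_shift ?T01 // natrD mulrDr.
rewrite -big_seq big_split /= -mulr_suml wt_sum // mul1r.
have -> : \sum_(i <- T) wt T i * ((flr B x)%:R + 1 - x <= i)%R%:R = \sum_(i <- T | (flr B x)%:R + 1 - x <= i) wt T i.
  by rewrite [RHS]big_mkcond; apply: eq_bigr => i _; case: ifP => _; rewrite ?mulr1 ?mulr0.
rewrite tele //; first lra.
by move=> t /T01 /andP[].
Qed.
Lemma rvtxE n (x0 : 'I_n) (r : seq 'I_n) i : (0 < size r)%N ->
  rvtx r i = if (1 <= i <= size r)%N then Some (nth x0 r i.-1) else None.
Proof.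
rewrite /rvtx; case: r => [|y r] //= _; case: ifP => // /andP[h1 h2].
by rewrite (set_nth_default y) //; case: i h1 h2 => //.
Qed.

Lemma rvtx_neq n (x0 : 'I_n) (r : seq 'I_n) j : uniq r -> (0 < size r)%N -> (j <= size r)%N ->
  rvtx r j != rvtx r j.+1.
Proof.
move=> ur r0 jl; rewrite !(rvtxE x0) //.
case: ifP => h1; case: ifP => h2 //; last by exfalso; move: h1 h2 r0 jl; lia.
move/andP: h1 => [h1 h1']; move/andP: h2 => [_ h2'].
apply/eqP => -[] /eqP; rewrite nth_uniq //; last by case: (j) h1 h1' => // k _ /=; lia.
by move/eqP; case: (j) h1 => // k _ /=; lia.
Qed.

Lemma Lin_of_Yxi (R : realFieldType) n (x0 : 'I_n) (c : R) (dd : 'I_n -> R) (r : seq 'I_n) (y : 'I_n -> R) :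
  uniq r -> (0 < size r)%N -> Yxi c dd r y ->
  forall i j, (i <= j <= size r)%N ->
  \sum_(i <= s < j) dd (nth x0 r s) <= c + c * \sum_(i <= s < j) y (nth x0 r s).
Proof.
move=> ur r0 [_ [f [g [H1 [H2 [H3 [H4 H5]]]]]]] i j /andP[ij jl].
pose phi t := f (rvtx r t) (rvtx r t.+1).
have eq1 : forall s, (s < size r)%N -> phi s + dd (nth x0 r s) = phi s.+1 + g (nth x0 r s).
  move=> s sl; have := H3 s.+1 _ (nth x0 r s); rewrite /phi /=; apply => //.
  by rewrite (rvtxE x0) //= sl.
have -> : \sum_(i <= s < j) dd (nth x0 r s) = \sum_(i <= s < j) (phi s.+1 - phi s) + \sum_(i <= s < j) g (nth x0 r s).
  rewrite -big_split /=; rewrite big_nat [in RHS]big_nat; apply: eq_bigr => s /andP[_ sj].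
  have := eq1 s (leq_trans sj jl); lra.
rewrite telescope_sumr //.
have hg : \sum_(i <= s < j) g (nth x0 r s) <= c * \sum_(i <= s < j) y (nth x0 r s).
  rewrite mulr_sumr big_nat [in X in _ <= X]big_nat; apply: ler_sum => s /andP[_ sj].
  apply: (H5 s.+1); first by apply/andP; split => //; apply: leq_trans sj jl.
  by rewrite (rvtxE x0) //= (leq_trans sj jl).
have hi : 0 <= phi i by apply: H1; apply: rvtx_neq => //; lia.
have hj : phi j <= c by apply: (H4 j.+1); apply/andP; split => //; lia.
lra.
Qed.
Fixpoint Lind (R : realFieldType) (e : nat -> R) (t : nat) : R :=
  if t is t'.+1 then Num.max 0 (Lind e t' + e t') else 0.

Lemma Lind_ge0 (R : realFieldType) (e : nat -> R) t : 0 <= Lind e t.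
Proof. by case: t => //= t; rewrite le_max lexx. Qed.

Lemma Lind_ge (R : realFieldType) (e : nat -> R) t : Lind e t + e t <= Lind e t.+1.
Proof. by rewrite /= le_max lexx orbT. Qed.

Lemma Lind_Q (R : realFieldType) (e : nat -> R) t :
  Lind e t = 0 \/ exists2 i, (i < t)%N & Lind e t = \sum_(i <= s < t) e s.
Proof.
elim: t => [|t IH] /=; first by left.
case: (lerP (Lind e t + e t) 0) => h.
  by left.
right; case: IH => [->|[i it ->]].
  by exists t => //; rewrite big_nat1 add0r.
by exists i; [lia | rewrite big_nat_recr //=; lia].
Qed.

Lemma Yxi_of_Lin (R : realFieldType) n (x0 : 'I_n) (c : R) (dd : 'I_n -> R) (r : seq 'I_n) (z : 'I_n -> R) :
  uniq r -> (0 < size r)%N -> 0 < c -> (forall v, 0 <= dd v) ->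
  (forall v, exists k : nat, z v = k%:R) ->
  (forall i j, (i <= j <= size r)%N ->
    \sum_(i <= s < j) dd (nth x0 r s) <= c + c * \sum_(i <= s < j) z (nth x0 r s)) ->
  Yxi c dd r z.
Proof.
move=> ur r0 c0 dd0 zi Lin; split => //.
have z0 : forall v, 0 <= z v by move=> v; case: (zi v) => k ->.
pose e s := dd (nth x0 r s) - c * z (nth x0 r s).
pose L := Lind e.
have Lc : forall t, (t <= size r)%N -> L t <= c.
  move=> t tl; rewrite /L; case: (Lind_Q e t) => [->|[i it ->]]; first exact: ltW.
  have := Lin i t (ltac:(apply/andP; split => //; lia)).
  rewrite /e sumrB -mulr_sumr; lra.
have Lle : forall t, L t.+1 <= L t + dd (nth x0 r t).
  move=> t; rewrite /L /= ge_max; apply/andP; split.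
    by apply: addr_ge0; [apply: Lind_ge0 | apply: dd0].
  rewrite /e lerD2l gerDl oppr_le0; apply: mulr_ge0 => //; exact: ltW.
pose f (u w : vertex n) := match w with Some v => L (index v r) | None => L (size r) end.
pose g v := if v \in r then L (index v r) + dd v - L (index v r).+1 else 0.
have fE : forall u i, (1 <= i <= (size r).+1)%N -> f u (rvtx r i) = L i.-1.
  move=> u i /andP[i1 il]; rewrite (rvtxE x0) //; case: ifP => h /=.
    by rewrite index_uniq //; case: i i1 il h => // i; lia.
  by have -> : i = (size r).+1 by move: h; lia.
have gE : forall i, (i < size r)%N -> g (nth x0 r i) = L i + dd (nth x0 r i) - L i.+1.
  by move=> i il; rewrite /g mem_nth // index_uniq.
have rE : forall i v, (1 <= i <= size r)%N -> rvtx r i = Some v -> v = nth x0 r i.-1.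
  by move=> i v hi; rewrite (rvtxE x0) // hi => -[<-].
exists f, g; split; [|split; [|split; [|split]]].
- by move=> u w _; case: w => [v|]; apply: Lind_ge0.
- move=> v; rewrite /g; case: ifP => // vr.
  have := Lle (index v r); rewrite nth_index //; lra.
- move=> i hi v hv; rewrite (rE i v hi hv) !fE; try lia.
  case: i hi {hv} => // i hi /=; rewrite gE; [lra | lia].
- by move=> i hi; rewrite fE // Lc //; lia.
- move=> i hi v hv; rewrite (rE i v hi hv).
  case: i hi {hv} => // i hi /=; rewrite gE; last lia.
  have := Lind_ge e i; rewrite /e -/L; lra.
Qed.

Definition psum (R : realFieldType) n (x0 : 'I_n) (rr : seq 'I_n) (Y : 'I_n -> R) t :=
  \sum_(0 <= s < t) Y (nth x0 rr s).

Definition zrow (R : realFieldType) n (x0 : 'I_n) (rr : seq 'I_n) (B : nat) (Y : 'I_n -> R) (th : R) (v : 'I_n) : R :=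
  if v \in rr then (flr B (psum x0 rr Y (index v rr).+1 + th))%:R - (flr B (psum x0 rr Y (index v rr) + th))%:R
  else (flr B (Y v + th))%:R.

Definition IntP (R : realFieldType) n (x0 : 'I_n) (rr : seq 'I_n) (c : R) (dd Y : 'I_n -> R) :=
  forall i j (M : nat), (i <= j <= size rr)%N ->
    M%:R * c + c < \sum_(i <= s < j) dd (nth x0 rr s) -> (M + 1)%:R <= \sum_(i <= s < j) Y (nth x0 rr s).

Lemma sum_nat (R : realFieldType) n (x0 : 'I_n) (rr : seq 'I_n) (z : 'I_n -> R) i j :
  (forall v, exists k : nat, z v = k%:R) -> exists K : nat, \sum_(i <= s < j) z (nth x0 rr s) = K%:R.
Proof.
move=> zi; apply: (big_ind (fun x => exists K : nat, x = K%:R)).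
- by exists 0%N.
- by move=> a b' [ka ->] [kb ->]; exists (ka + kb)%N; rewrite natrD.
- by move=> s _; apply: zi.
Qed.

Lemma Int_of_Yxi (R : realFieldType) n (x0 : 'I_n) (rr : seq 'I_n) (c : R) (dd z : 'I_n -> R) :
  uniq rr -> (0 < size rr)%N -> 0 < c -> Yxi c dd rr z -> IntP x0 rr c dd z.
Proof.
move=> ur r0 c0 hY i j M hij hM.
have hL := Lin_of_Yxi x0 ur r0 hY hij.
have [K hK] := sum_nat x0 rr i j (proj1 hY).
rewrite hK in hL *.
have : M%:R * c < K%:R * c by rewrite mulrC; lra.
rewrite ltr_pM2r // ltr_nat => h; rewrite ler_nat; lia.
Qed.

Lemma psum_mono (R : realFieldType) n (x0 : 'I_n) (rr : seq 'I_n) (Y : 'I_n -> R) t t' :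
  (forall v, 0 <= Y v) -> (t <= t')%N -> psum x0 rr Y t <= psum x0 rr Y t'.
Proof.
move=> Y0 tt; rewrite /psum (big_cat_nat (leq0n t) tt) /= lerDl.
by apply: sumr_ge0 => s _.
Qed.

Lemma psum_diff (R : realFieldType) n (x0 : 'I_n) (rr : seq 'I_n) (Y : 'I_n -> R) i j :
  (i <= j)%N -> \sum_(i <= s < j) Y (nth x0 rr s) = psum x0 rr Y j - psum x0 rr Y i.
Proof. by move=> ij; rewrite /psum (big_cat_nat (leq0n i) ij) /= addrC addrK. Qed.

Lemma psumS (R : realFieldType) n (x0 : 'I_n) (rr : seq 'I_n) (Y : 'I_n -> R) t :
  psum x0 rr Y t.+1 = psum x0 rr Y t + Y (nth x0 rr t).
Proof. by rewrite /psum big_nat_recr. Qed.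

Lemma zrow_prop (R : realFieldType) n (x0 : 'I_n) (rr : seq 'I_n) (B : nat) (Y : 'I_n -> R) (th : R) (b : 'I_n -> nat) :
  uniq rr -> (forall v, 0 <= Y v <= (b v)%:R) ->
  (forall t, (t <= size rr)%N -> psum x0 rr Y t <= B%:R) -> (forall v, Y v <= B%:R) -> 0 <= th < 1 ->
  forall v, exists k : nat, zrow x0 rr B Y th v = k%:R /\ (k <= b v)%N.
Proof.
move=> ur Yb PB YB /andP[t0 t1] v.
have Y0 : forall v, 0 <= Y v by move=> u; case/andP: (Yb u).
rewrite /zrow; case: ifP => vr.
  set t := index v rr.
  have tl : (t < size rr)%N by rewrite index_mem.
  have e : psum x0 rr Y t.+1 + th = psum x0 rr Y t + th + Y v by rewrite psumS nth_index //; lra.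
  have p0 : 0 <= psum x0 rr Y t by rewrite /psum; apply: sumr_ge0.
  have pB := PB t (ltnW tl); have pB' := PB t.+1 tl.
  have h1 := @flr_lo R B 0 (psum x0 rr Y t + th) (psum x0 rr Y t.+1 + th).
  have h2 := @flr_hi R B (b v) (psum x0 rr Y t + th) (psum x0 rr Y t.+1 + th).
  have := Yb v => /andP[yv0 yvb].
  rewrite addn0 in h1.
  have {}h1 := h1 ltac:(lra) ltac:(rewrite -natr1; lra) ltac:(lra).
  have {}h2 := h2 ltac:(lra) ltac:(lra) ltac:(rewrite -natr1; lra) ltac:(rewrite -natr1; lra) ltac:(lra).
  exists (flr B (psum x0 rr Y t.+1 + th) - flr B (psum x0 rr Y t + th))%N.
  by rewrite natrB //; split => //; lia.
have B0 : 0 <= B%:R :> R by [].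
have f0 : flr B th = 0%N by apply: flr_uniq => //; rewrite -natr1; lra.
have := Yb v => /andP[yv0 yvb].
have h2 := @flr_hi R B (b v) th (Y v + th).
rewrite f0 in h2.
have {}h2 := h2 ltac:(lra) ltac:(lra) ltac:(rewrite -natr1; lra) ltac:(rewrite -natr1; have := YB v; lra) ltac:(lra).
by exists (flr B (Y v + th)).
Qed.

Lemma zrow_Lin (R : realFieldType) n (x0 : 'I_n) (rr : seq 'I_n) (B : nat) (c : R) (dd Y : 'I_n -> R) (th : R) :
  uniq rr -> 0 < c -> (forall v, 0 <= Y v) ->
  (forall t, (t <= size rr)%N -> psum x0 rr Y t <= B%:R) -> 0 <= th < 1 ->
  IntP x0 rr c dd Y ->
  forall i j, (i <= j <= size rr)%N ->
    \sum_(i <= s < j) dd (nth x0 rr s) <= c + c * \sum_(i <= s < j) zrow x0 rr B Y th (nth x0 rr s).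
Proof.
move=> ur c0 Y0 PB /andP[t0 t1] hI i j /andP[ij jl].
pose G t := (flr B (psum x0 rr Y t + th))%:R : R.
have -> : \sum_(i <= s < j) zrow x0 rr B Y th (nth x0 rr s) = G j - G i.
  rewrite -telescope_sumr // big_nat [RHS]big_nat; apply: eq_bigr => s /andP[_ sj].
  have sl : (s < size rr)%N by apply: leq_trans sj jl.
  by rewrite /zrow mem_nth // index_uniq.
have p0 : forall t, 0 <= psum x0 rr Y t by move=> t; rewrite /psum; apply: sumr_ge0.
have B0 : 0 <= B%:R :> R by [].
have mono := @flr_lo R B 0 (psum x0 rr Y i + th) (psum x0 rr Y j + th).
rewrite addn0 in mono.
have := psum_mono x0 rr Y0 ij => pij.
have {}mono := mono ltac:(have := p0 i; lra) ltac:(rewrite -natr1; have := PB j jl; lra) ltac:(lra).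
set M := (flr B (psum x0 rr Y j + th) - flr B (psum x0 rr Y i + th))%N.
have GM : G j - G i = M%:R by rewrite /G /M natrB.
rewrite GM leNgt; apply/negP => hlt.
have := hI i j M (ltac:(by apply/andP)) ltac:(lra).
rewrite psum_diff //.
have [a1 a2] := @flr_spec R B (psum x0 rr Y i + th) ltac:(have := p0 i; lra) ltac:(rewrite -natr1; have := PB i (leq_trans ij jl); lra).
have [b1 b2] := @flr_spec R B (psum x0 rr Y j + th) ltac:(have := p0 j; lra) ltac:(rewrite -natr1; have := PB j jl; lra).
have : M%:R = (flr B (psum x0 rr Y j + th))%:R - (flr B (psum x0 rr Y i + th))%:R :> R by rewrite -GM.
rewrite natrD -!natr1 in b2 *; lra.
Qed.

Definition bcond (R : realFieldType) (T : seq R) (B : nat) (x : R) :=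
  (flr B x)%:R + 1 - x \in T \/ (flr B x)%:R + 1 - x = 1.

Lemma zrow_avg (R : realFieldType) n (x0 : 'I_n) (rr : seq 'I_n) (B : nat) (Y : 'I_n -> R) (T : seq R) :
  uniq rr -> uniq T -> (forall t, t \in T -> 0 <= t < 1) -> 0 \in T ->
  (forall v, 0 <= Y v <= B%:R) ->
  (forall t, (t <= size rr)%N -> psum x0 rr Y t <= B%:R) ->
  (forall t, (t <= size rr)%N -> bcond T B (psum x0 rr Y t)) ->
  (forall v, bcond T B (Y v)) ->
  forall v, \sum_(th <- T) wt T th * zrow x0 rr B Y th v = Y v.
Proof.
move=> ur uT T01 T0 YB PB Pc Yc v.
have p0 : forall t, 0 <= psum x0 rr Y t.
  by move=> t; rewrite /psum; apply: sumr_ge0 => s _; case/andP: (YB (nth x0 rr s)).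
case: (boolP (v \in rr)) => vr; last first.
  rewrite (eq_bigr (fun th => wt T th * (flr B (Y v + th))%:R)); last first.
    by move=> th _; rewrite /zrow (negbTE vr).
  have [h1 h2] := andP (YB v); apply: avg => //; exact: Yc.
set t := index v rr.
have tl : (t < size rr)%N by rewrite index_mem.
rewrite (eq_bigr (fun th => wt T th * (flr B (psum x0 rr Y t.+1 + th))%:R - wt T th * (flr B (psum x0 rr Y t + th))%:R)); last first.
  by move=> th _; rewrite /zrow vr mulrBr.
rewrite sumrB !avg //; try exact: PB; try exact: Pc; try exact: (PB _ (ltnW tl)); try exact: (Pc _ (ltnW tl)).
rewrite psumS nth_index //; lra.
Qed.

Lemma sumT (R : realFieldType) (T : seq R) (G : R -> R) :
  \sum_(k < size T) G (nth 0 T k) = \sum_(th <- T) G th.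
Proof. by rewrite (big_nth 0) big_mkord. Qed.

Lemma main_gen (R : realFieldType) (N n : nat) (c : R) (dd : 'I_N -> 'I_n -> R)
  (r : seq 'I_n) (b : 'I_n -> nat) :
  0 < c -> (forall xi v, 0 <= dd xi v) -> is_route r ->
  forall y : 'M[R]_(N, n),
    conv (fun z => Pi c dd r z /\ box b z) y <-> conv (Pi c dd r) y /\ box b y.
Proof.
move=> c0 dd0 [ur r0] y; split.
  case=> m [lam [p [hp [hl [hs hy]]]]]; split.
    by exists m, lam, p; split => // k; exact: (hp k).1.
  move=> xi v.
  have -> : y xi v = \sum_k lam k * p k xi v.
    by rewrite hy summxE; apply: eq_bigr => k _; rewrite mxE.
  split; first by apply: sumr_ge0 => k _; apply: mulr_ge0 => //; exact: ((hp k).2 xi v).1.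
  apply: le_trans (ler_sum _ (fun k _ => ler_wpM2l (hl k) ((hp k).2 xi v).2)) _.
  by rewrite -mulr_suml hs mul1r.
case=> [[m [lam [p [hp [hl [hs hy]]]]]] hb].
case: r ur r0 {hp} (hp) => [|x0 r'] // ur r0 hp.
set rr := x0 :: r' in ur r0 hp *.
have YB0 : forall xi v, 0 <= y xi v <= (b v)%:R by move=> xi v; case: (hb xi v) => -> ->.
have Y0 : forall xi v, 0 <= y xi v by move=> xi v; case: (hb xi v).
pose B := (\sum_(0 <= s < size rr) b (nth x0 rr s) + \sum_(v : 'I_n) b v)%N.
have PB : forall xi t, (t <= size rr)%N -> psum x0 rr (fun v => y xi v) t <= B%:R.
  move=> xi t tl; apply: (@le_trans _ _ (\sum_(0 <= s < t) (b (nth x0 rr s))%:R)).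
    by apply: ler_sum => s _; case: (hb xi (nth x0 rr s)).
  rewrite -natr_sum ler_nat /B (big_cat_nat (leq0n t) tl) /= -addnA; exact: leq_addr.
have YvB : forall xi v, y xi v <= B%:R.
  move=> xi v; apply: le_trans (proj2 (hb xi v)) _; rewrite ler_nat /B (bigD1 v) //=.
  by rewrite addnCA; apply: leq_addr.
have hI : forall xi, IntP x0 rr c (dd xi) (fun v => y xi v).
  move=> xi i j M hij hM.
  have hk : forall k, (M + 1)%:R <= \sum_(i <= s < j) p k xi (nth x0 rr s).
    by move=> k; apply: (Int_of_Yxi ur r0 c0 (hp k xi)).
  rewrite (eq_bigr (fun s => \sum_k lam k * p k xi (nth x0 rr s))); last first.
    by move=> s _; rewrite hy summxE; apply: eq_bigr => k _; rewrite mxE.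
  rewrite exchange_big /=.
  apply: (@le_trans _ _ (\sum_k lam k * (M + 1)%:R)); first by rewrite -mulr_suml hs mul1r.
  by apply: ler_sum => k _; rewrite -mulr_sumr; apply: ler_wpM2l.
pose X := [seq psum x0 rr (fun v => y xi v) t | xi <- enum 'I_N, t <- iota 0 (size rr).+1]
  ++ [seq y xi v | xi <- enum 'I_N, v <- enum 'I_n].
have XB : forall x, x \in X -> 0 <= x <= B%:R.
  move=> x; rewrite mem_cat => /orP[/allpairsP[[xi t] [_ ht ->]] | /allpairsP[[xi v] [_ _ ->]]] /=.
    rewrite PB; last by move: ht; rewrite -[(xi, t).2]/t mem_iota; lia.
    by rewrite andbT /psum; apply: sumr_ge0.
  by rewrite YvB Y0.
pose bt (x : R) := (flr B x)%:R + 1 - x.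
pose T := undup (0 :: [seq bt x | x <- X & bt x < 1]).
have uT : uniq T by apply: undup_uniq.
have T0 : 0 \in T by rewrite mem_undup inE eqxx.
have T01 : forall th, th \in T -> 0 <= th < 1.
  move=> th; rewrite mem_undup inE => /orP[/eqP -> | /mapP[x]]; first by rewrite lexx ltr01.
  rewrite mem_filter => /andP[hlt xX] ->; rewrite hlt andbT.
  have /andP[x0' xB] := XB x xX.
  have [_ h2] := @flr_spec R B x x0' ltac:(rewrite -natr1; lra).
  by rewrite /bt; move: h2; rewrite -natr1; lra.
have bc : forall x, x \in X -> bcond T B x.
  move=> x xX; rewrite /bcond; case: (ltrP (bt x) 1) => h.
    left; rewrite mem_undup inE; apply/orP; right; apply/mapP; exists x => //.
    by rewrite mem_filter h.
  right; have /andP[x0' xB] := XB x xX.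
  have [h1 _] := @flr_spec R B x x0' ltac:(rewrite -natr1; lra).
  by move: h; rewrite /bt; lra.
have Pc : forall xi t, (t <= size rr)%N -> bcond T B (psum x0 rr (fun v => y xi v) t).
  move=> xi t tl; apply: bc; rewrite mem_cat; apply/orP; left; apply/allpairsP.
  exists (xi, t); split => //; [exact: mem_enum | rewrite -[(xi, t).2]/t mem_iota; lia].
have Yc : forall xi v, bcond T B (y xi v).
  move=> xi v; apply: bc; rewrite mem_cat; apply/orP; right; apply/allpairsP.
  by exists (xi, v); rewrite /= !mem_enum.
exists (size T), (fun k => wt T (nth 0 T k)),
  (fun k => \matrix_(xi, v) zrow x0 rr B (fun v => y xi v) (nth 0 T k) v).
have thT : forall k : 'I_(size T), nth 0 T k \in T by move=> k; apply: mem_nth.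
split; [|split; [|split]].
- move=> k; have hth := T01 _ (thT k); split.
    move=> xi; apply: (@Yxi_of_Lin _ _ x0 _ _ _ _ ur r0 c0 (dd0 xi)).
      move=> v; rewrite mxE.
      have [k' [hk _]] := zrow_prop (th := nth 0 T k) ur (YB0 xi) (PB xi) (YvB xi) hth v.
      by exists k'.
    move=> i j hij.
    rewrite [X in _ <= _ + _ * X](eq_bigr (fun s => zrow x0 rr B (fun v => y xi v) (nth 0 T k) (nth x0 rr s))); last first.
      by move=> s _; rewrite /= mxE.
    exact: (zrow_Lin ur c0 (Y0 xi) (PB xi) hth (hI xi)).
  move=> xi v; rewrite mxE.
  have [k' [-> hk]] := zrow_prop (th := nth 0 T k) ur (YB0 xi) (PB xi) (YvB xi) hth v.
  by rewrite ler0n ler_nat.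
- move=> k; apply: wt_ge0; exact: (andP (T01 _ (thT k))).2.
- by rewrite (sumT T (wt T)); apply: wt_sum.
- apply/matrixP => xi v; rewrite summxE.
  rewrite (eq_bigr (fun k : 'I_(size T) => wt T (nth 0 T k) * zrow x0 rr B (fun v => y xi v) (nth 0 T k) v)); last first.
    by move=> k _; rewrite !mxE.
  rewrite (sumT T (fun th => wt T th * zrow x0 rr B (fun v => y xi v) th v)).
  symmetry; apply: zrow_avg => //.
  + by move=> u; rewrite Y0 YvB.
  + exact: PB.
  + exact: Pc.
Qed.

Theorem corollary1 (R : realFieldType) (N n : nat) (C : rat)
    (d : 'I_N -> 'I_n -> rat)
    (HC : 0 < C)
    (Hd0 : forall xi v, 0 <= d xi v)
    (HdC : forall xi v, d xi v <= C)
    (r : seq 'I_n) (Hr : is_route r) (b : 'I_n -> nat) :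
  forall y : 'M[R]_(N, n),
    conv (fun z => Pi (ratr C) (fun xi v => ratr (d xi v)) r z /\ box b z) y
    <-> conv (Pi (ratr C) (fun xi v => ratr (d xi v)) r) y /\ box b y.
Proof.
apply: main_gen => //; first by rewrite ltr0q.
by move=> xi v; rewrite ler0q.
Qed.
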